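(* Let $X_1\xleftarrow{\psi_1}X_2\xleftarrow{\psi_2}\cdots$ be a projective system of finite nonempty quandles (each with the discrete topology) and quandle homomorphisms, and let $A_1\xrightarrow{\phi_1}A_2\xrightarrow{\phi_2}\cdots$ be a direct system of discrete abelian groups $A_n$ with automorphisms $T_n$ and group homomorphisms $\phi_n$ satisfying $\phi_nT_n=T_{n+1}\phi_n$. Let $\varprojlim X_n$ carry the componentwise quandle operation and the subspace topology of $\prod_n X_n$, and let $\varinjlim A_n$ carry the discrete topology and the Alexander structure induced by the $T_n$. Then for every $k\ge1$ the map $\Psi:\varinjlim_n H^k_T(X_n,A_n)\to H^k_{TC}(\varprojlim X_n,\varinjlim A_n)$ is a group isomorphism.
   Context: For a quandle $X$ and Alexander quandle $(A,T)$ ($a*b=Ta+(1-T)b$), $H^k_T(X,A)$ is the discrete twisted cohomology: cochains are all maps $f:X^k\to A$ vanishing when $x_i=x_{i+1}$ for some $i$, with $(\delta^k f)(x_1,\dots,x_{k+1})=\sum_{i=1}^{k+1}(-1)^i[Tf(x_1,\dots,\widehat{x_i},\dots,x_{k+1})-f(x_1*x_i,\dots,x_{i-1}*x_i,x_{i+1},\dots,x_{k+1})]$, $H^1_T=\ker\delta^1$, $H^k_T=\ker\delta^k/\operatorname{im}\delta^{k-1}$ for $k\ge2$. $H^k_{TC}$ is defined in the same way for a topological quandle and topological Alexander quandle, using only continuous cochains. The direct system of cohomology groups has maps $\tau_n:H^k_T(X_n,A_n)\to H^k_T(X_{n+1},A_{n+1})$, $[f]\mapsto[\phi_n\circ f\circ\psi_n^{\times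 k}]$. With $\pi_n:\varprojlim X_j\to X_n$ the canonical projections and $\iota_n:A_n\to\varinjlim A_j$ the canonical maps, $\sigma_n:H^k_T(X_n,A_n)\to H^k_{TC}(\varprojlim X_j,\varinjlim A_j)$ is $[f]\mapsto[\iota_n\circ f\circ\pi_n^{\times k}]$; these are compatible with the $\tau_n$ and $\Psi$ is the induced map on the direct limit. *)

(* Defs.v *)
From HB Require Import structures.
From mathcomp Require Import all_boot all_order all_algebra.
From Stdlib Require Import ClassicalEpsilon.
Unset Printing Implicit Defensive.
Import GRing.Theory.

Definition is_quandle (X : Type) (op : X -> X -> X) : Prop :=
  [/\ forall x, op x x = x,
      forall y, bijective (fun x => op x y)
    & forall x y z, op (op x y) z = op (op x z) (op y z)].

Record AlexQ := {
  acar :> Type;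
  a0 : acar;
  aadd : acar -> acar -> acar;
  aopp : acar -> acar;
  aT : acar -> acar }.
Arguments a0 : clear implicits.
Arguments aadd : clear implicits.
Arguments aopp : clear implicits.
Arguments aT : clear implicits.

Definition zmodAlex (V : zmodType) (T : V -> V) : AlexQ :=
  {| acar := V; a0 := 0%R; aadd := fun a b => (a + b)%R;
     aopp := fun a => (- a)%R; aT := T |}.

Section Cochains.
Variables (R : AlexQ) (X : Type) (op : X -> X -> X).

Definition is_cochain k (f : ('I_k -> X) -> R) : Prop :=
  forall x : 'I_k -> X,
    (exists i j : 'I_k, nat_of_ord j = (nat_of_ord i).+1 /\ x i = x j) ->
    f x = a0 R.

(* (delta f)(x_1..x_{k+1}) = sum_{i=1}^{k+1} (-1)^i [T f(x with x_i removed)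
      - f(x_1*x_i, ..., x_{i-1}*x_i, x_{i+1}, ..., x_{k+1})];
   here i : 'I_k.+1 is 0-based, so the sign is (-1)^(i+1). *)
Definition cobdry k (f : ('I_k -> X) -> R) : ('I_k.+1 -> X) -> R :=
  fun x =>
    foldr (aadd R) (a0 R)
      [seq (if odd i.+1 then aopp R else (fun a => a))
             (aadd R (aT R (f (fun j : 'I_k => x (lift i j))))
                     (aopp R (f (fun j : 'I_k =>
                                   if (nat_of_ord j < nat_of_ord i)%N
                                   then op (x (lift i j)) (x i)
                                   else x (lift i j)))))
      | i : 'I_k.+1 <- enum 'I_k.+1].

Definition is_cocycle k (f : ('I_k -> X) -> R) : Prop :=
  is_cochain k f /\ forall x, cobdry k f x = a0 R.

(* Equality of classes in H^{m+1}: for m+1 = 1 (H^1 = ker delta^1) plain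
   equality; for m+1 >= 2, f = g + delta h for some m-cochain h satisfying
   the admissibility condition P (True for discrete cohomology,
   continuity for H_TC). *)
Definition cohom_eq m (P : (('I_m -> X) -> R) -> Prop)
    (f g : ('I_m.+1 -> X) -> R) : Prop :=
  (forall x, f x = g x) \/
  ((0 < m)%N /\ exists h : ('I_m -> X) -> R,
      [/\ P h, is_cochain m h & forall x, f x = aadd R (g x) (cobdry m h x)]).
End Cochains.

Section InvLim.
Variables (X : nat -> Type) (psi : forall n, X n.+1 -> X n).

Definition invlim := {x : forall n, X n | forall n, psi n (x n.+1) = x n}.

Definition proj_n n (x : invlim) : X n := proj1_sig x n.

Variables (op : forall n, X n -> X n -> X n)
          (hpsi : forall n a b, psi n (op n.+1 a b) = op n (psi n a) (psi n b)).

Lemma invlim_op_proof (x y : invlim) :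
  forall n, psi n (op n.+1 (proj1_sig x n.+1) (proj1_sig y n.+1))
            = op n (proj1_sig x n) (proj1_sig y n).
Proof. by move=> n; rewrite hpsi (proj2_sig x) (proj2_sig y). Qed.

Definition invlim_op (x y : invlim) : invlim :=
  exist _ (fun n => op n (proj1_sig x n) (proj1_sig y n)) (invlim_op_proof x y).
End InvLim.

(* Continuity of g : (lim X)^k -> D, where lim X carries the subspace topology
   of the product of the discrete X n, (lim X)^k the product topology, and D
   is discrete. *)
Definition is_cont (X : nat -> Type) (psi : forall n, X n.+1 -> X n)
    (D : Type) k (g : ('I_k -> invlim X psi) -> D) : Prop :=
  forall x, exists N, forall y,
    (forall (j : 'I_k) n, (n <= N)%N -> proj_n X psi n (y j) = proj_n X psi n (x j)) ->
    g y = g x.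

Fixpoint psis (X : nat -> Type) (psi : forall n, X n.+1 -> X n) n d
  : X (d + n) -> X n :=
  match d with
  | 0 => fun x => x
  | d'.+1 => fun x => psis X psi n d' (psi (d' + n) x)
  end.

(* Direct limit of A_0 -> A_1 -> ... (phi n : A n -> A n.+1), as the set of
   equivalence classes of the disjoint union under eventual equality.   *)
Section DirLim.
Variables (A : nat -> zmodType) (phi : forall n, A n -> A n.+1)
          (T : forall n, A n -> A n).

Fixpoint phis n d : A n -> A (d + n) :=
  match d with
  | 0 => fun a => a
  | d'.+1 => fun a => phi (d' + n) (phis n d' a)
  end.

Definition dl_eqv (x y : {n & A n}) : Prop :=
  exists d1 d2,
    existT A (d1 + projT1 x) (phis (projT1 x) d1 (projT2 x))
    = existT A (d2 + projT1 y) (phis (projT1 y) d2 (projT2 y)).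

Definition dirlim := {C : {n & A n} -> Prop | exists x, C = dl_eqv x}.

Definition dl_cls (x : {n & A n}) : dirlim :=
  exist _ (dl_eqv x) (ex_intro _ x erefl).

Definition dl_iota n (a : A n) : dirlim := dl_cls (existT A n a).

Definition dl_inh : inhabited {n & A n} := inhabits (existT A 0 0%R).

Definition dl_zero : dirlim := dl_iota 0 0%R.

(* operations via representatives at a common level *)
Definition dl_add (u v : dirlim) : dirlim :=
  dl_cls (epsilon dl_inh (fun z => exists p (a b : A p),
     [/\ proj1_sig u (existT A p a), proj1_sig v (existT A p b)
       & z = existT A p (a + b)%R])).

Definition dl_opp (u : dirlim) : dirlim :=
  dl_cls (epsilon dl_inh (fun z => exists p (a : A p),
     proj1_sig u (existT A p a) /\ z = existT A p (- a)%R)).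

Definition dl_T (u : dirlim) : dirlim :=
  dl_cls (epsilon dl_inh (fun z => exists p (a : A p),
     proj1_sig u (existT A p a) /\ z = existT A p (T p a))).

Definition dl_alex : AlexQ :=
  {| acar := dirlim; a0 := dl_zero; aadd := dl_add; aopp := dl_opp; aT := dl_T |}.
End DirLim.

Definition sigma_map (X : nat -> Type) (psi : forall n, X n.+1 -> X n)
    (A : nat -> zmodType) (phi : forall n, A n -> A n.+1) k n
    (f : ('I_k -> X n) -> A n) : ('I_k -> invlim X psi) -> dirlim A phi :=
  fun x => dl_iota A phi n (f (fun j => proj_n X psi n (x j))).

Definition tau_iter (X : nat -> Type) (psi : forall n, X n.+1 -> X n)
    (A : nat -> zmodType) (phi : forall n, A n -> A n.+1) k n d
    (f : ('I_k -> X n) -> A n) : ('I_k -> X (d + n)) -> A (d + n) :=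
  fun x => phis A phi n d (f (fun j => psis X psi n d (x j))).

Definition castco (X : nat -> Type) (A : nat -> zmodType) k p q (e : p = q)
    (f : ('I_k -> X p) -> A p) : ('I_k -> X q) -> A q :=
  eq_rect p (fun r => ('I_k -> X r) -> A r) f q e.

(* Main.v *)
Require Import Defs.
From HB Require Import structures.
From mathcomp Require Import all_boot all_order all_algebra.
From Stdlib Require Import ClassicalEpsilon ProofIrrelevance FunctionalExtensionality PropExtensionality Eqdep_dec Classical.
Set Implicit Arguments. Unset Strict Implicit. Unset Printing Implicit Defensive.
Import GRing.Theory.
Section DL.
Variables (A : nat -> zmodType) (T : forall n, {additive A n -> A n})
  (phi : forall n, {additive A n -> A n.+1})
  (phiT : forall n a, phi n (T n a) = T n.+1 (phi n a)).
Local Notation ph := (fun n => (phi n : A n -> A n.+1)).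
Local Notation Tf := (fun n => (T n : A n -> A n)).
Local Notation SA := {n : nat & A n}.

Definition Sh (x : SA) : SA := existT _ (projT1 x).+1 (phi _ (projT2 x)).

Lemma phisE n d a : existT _ (d+n) (phis A ph n d a) = iter d Sh (existT _ n a).
Proof. elim: d => [|d IH] //=. by rewrite -IH. Qed.

Lemma phisD n d : {morph phis A ph n d : a b / (a + b)%R}.
Proof. elim: d => [|d IH] a b //=. by rewrite IH raddfD. Qed.
Lemma phisN n d : {morph phis A ph n d : a / (- a)%R}.
Proof. elim: d => [|d IH] a //=. by rewrite IH raddfN. Qed.
Lemma phis0 n d : phis A ph n d 0%R = 0%R.
Proof. elim: d => [|d IH] //=. by rewrite IH raddf0. Qed.
Lemma phisT n d a : phis A ph n d (T n a) = T (d + n) (phis A ph n d a).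
Proof. elim: d => [|d IH] //=. by rewrite IH phiT. Qed.

Lemma existT_inj2 n (a b : A n) : existT (fun k => A k) n a = existT _ n b -> a = b.
Proof. exact: (inj_pair2_eq_dec _ PeanoNat.Nat.eq_dec). Qed.

Lemma dl_eqvE x y : dl_eqv A ph x y <-> exists d1 d2, iter d1 Sh x = iter d2 Sh y.
Proof.
case: x => n a; case: y => p b /=; rewrite /dl_eqv /=.
by split=> -[d1 [d2 E]]; exists d1, d2; move: E; rewrite !phisE.
Qed.

Lemma iter_Sh_lev d x : projT1 (iter d Sh x) = d + projT1 x.
Proof. by elim: d => //= d ->. Qed.

Lemma dl_eqv_refl x : dl_eqv A ph x x.
Proof. by apply/dl_eqvE; exists 0, 0. Qed.
Lemma dl_eqv_sym x y : dl_eqv A ph x y -> dl_eqv A ph y x.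
Proof. by move/dl_eqvE=> [d1 [d2 E]]; apply/dl_eqvE; exists d2, d1. Qed.
Lemma dl_eqv_trans x y z : dl_eqv A ph x y -> dl_eqv A ph y z -> dl_eqv A ph x z.
Proof.
move/dl_eqvE=> [d1 [d2 E1]] /dl_eqvE [d3 [d4 E2]]; apply/dl_eqvE.
exists (d3 + d1), (d2 + d4).
by rewrite !iterD E1 -iterD addnC iterD E2.
Qed.

Lemma dl_clsP x y : dl_cls A ph x = dl_cls A ph y <-> dl_eqv A ph x y.
Proof.
split.
  move=> E; have: proj1_sig (dl_cls A ph y) y by exact: dl_eqv_refl.
  by rewrite -E.
move=> H; rewrite /dl_cls.
have E : dl_eqv A ph x = dl_eqv A ph y.
  apply: functional_extensionality => z; apply: propositional_extensionality.
  split=> Hz; [apply: dl_eqv_trans (dl_eqv_sym H) Hz|apply: dl_eqv_trans H Hz].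
move: (ex_intro _ x _) (ex_intro _ y _); rewrite E => p q.
by rewrite (proof_irrelevance _ p q).
Qed.

Lemma dl_surj (u : dirlim A ph) : exists n a, u = dl_iota A ph n a.
Proof.
case: u => C [[n a] EC]; exists n, a; rewrite /dl_iota /dl_cls.
move: (ex_intro _ _ _); rewrite EC => p.
by rewrite (proof_irrelevance _ p (ex_intro _ (existT _ n a) erefl)).
Qed.

Lemma iotaP n a p b : dl_iota A ph n a = dl_iota A ph p b <->
  exists d1 d2, existT (fun k => A k) (d1 + n) (phis A ph n d1 a) = existT _ (d2 + p) (phis A ph p d2 b).
Proof. by rewrite /dl_iota dl_clsP. Qed.

Lemma iota_same n a b : dl_iota A ph n a = dl_iota A ph n b <->
  exists d, phis A ph n d a = phis A ph n d b.
Proof.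
rewrite iotaP; split.
  move=> [d1 [d2 E]]; have := f_equal (@projT1 _ _) E => /= /eqP; rewrite eqn_add2r => /eqP e.
  by subst; exists d2; apply: existT_inj2.
by move=> [d E]; exists d, d; rewrite E.
Qed.

Lemma iota_phis n d a : dl_iota A ph (d + n) (phis A ph n d a) = dl_iota A ph n a.
Proof. by apply/iotaP; exists 0, d. Qed.

Lemma iota_phi n a : dl_iota A ph n.+1 (phi n a) = dl_iota A ph n a.
Proof. exact: (iota_phis 1). Qed.

Lemma iota_cast p q (e : p = q) (c : A p) : dl_iota A ph q (eq_rect p (fun k => A k) c q e) = dl_iota A ph p c.
Proof. by subst. Qed.

Lemma iota_raise n a q : n <= q -> exists b : A q, dl_iota A ph n a = dl_iota A ph q b.
Proof.
move=> le; have e : q - n + n = q by rewrite subnK.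
exists (eq_rect _ (fun k => A k) (phis A ph n (q - n) a) _ e).
by rewrite iota_cast iota_phis.
Qed.

Lemma iota0 n : dl_iota A ph n 0%R = dl_zero A ph.
Proof.
apply/iotaP; exists 0, n; rewrite phis0 /=.
have H q : q = n -> existT (fun k => A k) q (0 : A q)%R = existT _ n (0 : A n)%R by move->.
rewrite (phis0 0 n); symmetry; apply: H; exact: addn0.
Qed.

Lemma comb2 n a b p a' b' :
  dl_eqv A ph (existT _ n a) (existT _ p a') -> dl_eqv A ph (existT _ n b) (existT _ p b') ->
  exists c1 c2, existT (fun k => A k) (c1 + n) (phis A ph n c1 a) = existT _ (c2 + p) (phis A ph p c2 a')
   /\ existT (fun k => A k) (c1 + n) (phis A ph n c1 b) = existT _ (c2 + p) (phis A ph p c2 b').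
Proof.
move=> /dl_eqvE [d1 [d2 E1]] /dl_eqvE [e1 [e2 E2]].
have L1 := f_equal (@projT1 _ _) E1; have L2 := f_equal (@projT1 _ _) E2.
rewrite !iter_Sh_lev /= in L1 L2.
exists (e1 + d1), (e1 + d2); rewrite !phisE; split.
  by rewrite iterD E1 -iterD.
have -> : e1 + d2 = d1 + e2 by apply/eqP; rewrite -(eqn_add2r p) -!addnA -L1 -L2 addnCA.
by rewrite addnC iterD E2 -iterD.
Qed.

Lemma existT_op (f : forall k, A k -> A k -> A k) i j u u' v v' :
  existT (fun k => A k) i u = existT _ j u' -> existT (fun k => A k) i v = existT _ j v' ->
  existT (fun k => A k) i (f i u v) = existT _ j (f j u' v').
Proof.
move=> E1 E2; have e := f_equal (@projT1 _ _) E1; simpl in e; subst j.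
by rewrite (existT_inj2 E1) (existT_inj2 E2).
Qed.

Lemma existT_op1 (f : forall k, A k -> A k) i j u u' :
  existT (fun k => A k) i u = existT _ j u' ->
  existT (fun k => A k) i (f i u) = existT _ j (f j u').
Proof.
move=> E1; have e := f_equal (@projT1 _ _) E1; simpl in e; subst j.
by rewrite (existT_inj2 E1).
Qed.

Lemma dl_addE n a b : dl_add A ph (dl_iota A ph n a) (dl_iota A ph n b) = dl_iota A ph n (a + b)%R.
Proof.
rewrite /dl_add; set P := (X in epsilon _ X).
have [z Pz] : exists z, P z by exists (existT _ n (a + b)%R), n, a, b; split=> //; apply: dl_eqv_refl.
have := epsilon_spec (dl_inh A) P (ex_intro _ z Pz).
move: (epsilon _ _) => w [p [a' [b' [/= Ha Hb ->]]]].
apply/dl_clsP/dl_eqv_sym; have [c1 [c2 [E1 E2]]] := comb2 Ha Hb.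
apply/dl_eqvE; exists c1, c2; rewrite -!phisE /= !phisD.
exact: (existT_op (fun k u v => u + v)%R E1 E2).
Qed.

Lemma dl_oppE n a : dl_opp A ph (dl_iota A ph n a) = dl_iota A ph n (- a)%R.
Proof.
rewrite /dl_opp; set P := (X in epsilon _ X).
have [z Pz] : exists z, P z by exists (existT _ n (- a)%R), n, a; split=> //; apply: dl_eqv_refl.
have := epsilon_spec (dl_inh A) P (ex_intro _ z Pz).
move: (epsilon _ _) => w [p [a' [/= Ha ->]]].
apply/dl_clsP/dl_eqv_sym; have [c1 [c2 [E1 _]]] := comb2 Ha Ha.
apply/dl_eqvE; exists c1, c2; rewrite -!phisE /= !phisN.
exact: (existT_op1 (fun k u => - u)%R E1).
Qed.

Lemma dl_TE n a : dl_T A ph Tf (dl_iota A ph n a) = dl_iota A ph n (T n a).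
Proof.
rewrite /dl_T; set P := (X in epsilon _ X).
have [z Pz] : exists z, P z by exists (existT _ n (T n a)), n, a; split=> //; apply: dl_eqv_refl.
have := epsilon_spec (dl_inh A) P (ex_intro _ z Pz).
move: (epsilon _ _) => w [p [a' [/= Ha ->]]].
apply/dl_clsP/dl_eqv_sym; have [c1 [c2 [E1 _]]] := comb2 Ha Ha.
apply/dl_eqvE; exists c1, c2; rewrite -!phisE /= !phisT.
exact: (existT_op1 (fun k u => T k u) E1).
Qed.

Lemma phis_mono n d c a b : d <= c -> phis A ph n d a = phis A ph n d b ->
  phis A ph n c a = phis A ph n c b.
Proof.
move=> le E; apply: existT_inj2; rewrite !phisE -(subnK le) !iterD -!phisE.
by rewrite E.
Qed.

End DL.
Section Gen.
Lemma cobdry_morph (R1 R2 : AlexQ) (Y : Type) (op : Y -> Y -> Y) k (h : R1 -> R2)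
  (hadd : forall a b, h (aadd R1 a b) = aadd R2 (h a) (h b))
  (h0 : h (a0 R1) = a0 R2)
  (hopp : forall a, h (aopp R1 a) = aopp R2 (h a))
  (hT : forall a, h (aT R1 a) = aT R2 (h a)) f x :
  h (cobdry R1 Y op k f x) = cobdry R2 Y op k (fun y => h (f y)) x.
Proof.
rewrite /cobdry; elim: (enum _) => //= i s IH; rewrite hadd IH; congr aadd.
by case: ifP => _; rewrite ?hopp hadd hT hopp.
Qed.

Lemma cobdry_congr (R : AlexQ) (Y Z : Type) (opY : Y -> Y -> Y) (opZ : Z -> Z -> Z) k
  (F : ('I_k -> Y) -> R) (H : ('I_k -> Z) -> R) y z :
  (forall i : 'I_k.+1, F (fun j => y (lift i j)) = H (fun j => z (lift i j)) /\
     F (fun j : 'I_k => if (nat_of_ord j < nat_of_ord i)%N then opY (y (lift i j)) (y i) else y (lift i j))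
     = H (fun j : 'I_k => if (nat_of_ord j < nat_of_ord i)%N then opZ (z (lift i j)) (z i) else z (lift i j))) ->
  cobdry R Y opY k F y = cobdry R Z opZ k H z.
Proof.
move=> E; rewrite /cobdry; congr foldr; apply: eq_map => i.
by have [-> ->] := E i.
Qed.

Lemma cobdry_pull (R : AlexQ) (Y Z : Type) (opY : Y -> Y -> Y) (opZ : Z -> Z -> Z) k
  (pi : Y -> Z) (hpi : forall a b, pi (opY a b) = opZ (pi a) (pi b))
  (f : ('I_k -> Z) -> R) y :
  cobdry R Y opY k (fun w => f (fun j => pi (w j))) y = cobdry R Z opZ k f (fun j => pi (y j)).
Proof.
apply: cobdry_congr => i; split=> //; congr f; apply: functional_extensionality => j.
by case: ifP.
Qed.
End Gen.
Unset Implicit Arguments.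
Section Main.
Variables (X : nat -> finType) (opX : forall n, X n -> X n -> X n)
  (Xne : forall n, (0 < #|X n|)%N)
  (psi : forall n, X n.+1 -> X n)
  (hpsi : forall n a b, psi n (opX n.+1 a b) = opX n (psi n a) (psi n b))
  (A : nat -> zmodType) (T : forall n, {additive A n -> A n})
  (phi : forall n, {additive A n -> A n.+1})
  (phiT : forall n a, phi n (T n a) = T n.+1 (phi n a)).
Local Notation Xt := (fun n => (X n : Type)).
Local Notation ph := (fun n => (phi n : A n -> A n.+1)).
Local Notation Tf := (fun n => (T n : A n -> A n)).
Local Notation L := (invlim Xt psi).
Local Notation Lop := (invlim_op Xt psi opX hpsi).
Local Notation D := (dl_alex A ph Tf).
Local Notation An n := (zmodAlex (A n) (Tf n)).
Local Notation pr := (proj_n Xt psi).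
Local Notation sig k n f := (sigma_map Xt psi A ph k n f).
Local Notation tau k n d f := (tau_iter Xt psi A ph k n d f).
Local Notation ps := (psis Xt psi).
Local Notation iota := (dl_iota A ph).

Lemma pr_thread (l : L) n d : ps n d (pr (d+n) l) = pr n l.
Proof. elim: d => //= d IH; by rewrite /proj_n (proj2_sig l). Qed.

Lemma psis_op n d a b : ps n d (opX (d+n) a b) = opX n (ps n d a) (ps n d b).
Proof. elim: d a b => //= d IH a b; by rewrite hpsi IH. Qed.

Lemma pr_op n a b : pr n (Lop a b) = opX n (pr n a) (pr n b).
Proof. by []. Qed.

Lemma agree_down M (u v : L) : pr M u = pr M v -> forall n, n <= M -> pr n u = pr n v.
Proof.
elim: M => [|M IH] E n.
  by rewrite leqn0 => /eqP ->.
rewrite leq_eqVlt => /orP [/eqP -> //|]; rewrite ltnS; apply: IH.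
by rewrite /proj_n -(proj2_sig u) -(proj2_sig v); congr psi.
Qed.

Lemma iota_morph n :
  [/\ forall a b, iota n (aadd (An n) a b) = aadd D (iota n a) (iota n b),
      iota n (a0 (An n)) = a0 D,
      forall a, iota n (aopp (An n) a) = aopp D (iota n a) &
      forall a, iota n (aT (An n) a) = aT D (iota n a)].
Proof.
split=> [a b|||a] /=; first by rewrite dl_addE.
- exact: iota0.
- by move=> a; rewrite dl_oppE.
- by rewrite dl_TE.
Qed.

Lemma sigma_cobdry k n f y :
  sig k.+1 n (cobdry (An n) (X n) (opX n) k f) y = cobdry D L Lop k (sig k n f) y.
Proof.
rewrite /sigma_map; have [h1 h2 h3 h4] := iota_morph n.
rewrite (@cobdry_morph (An n) D _ _ _ (iota n) h1 h2 h3 h4).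
by rewrite -(cobdry_pull _ (pi := pr n) (opY := Lop)).
Qed.

Lemma tau_cobdry k n d f x :
  tau k.+1 n d (cobdry (An n) (X n) (opX n) k f) x
  = cobdry (An (d+n)) (X (d+n)) (opX (d+n)) k (tau k n d f) x.
Proof.
rewrite /tau_iter.
have h1 : forall a b, phis A ph n d (aadd (An n) a b) = aadd (An (d+n)) (phis A ph n d a) (phis A ph n d b).
  by move=> a b /=; rewrite phisD.
have h2 : phis A ph n d (a0 (An n)) = a0 (An (d+n)) by rewrite /= phis0.
have h3 : forall a, phis A ph n d (aopp (An n) a) = aopp (An (d+n)) (phis A ph n d a).
  by move=> a /=; rewrite phisN.
have h4 : forall a, phis A ph n d (aT (An n) a) = aT (An (d+n)) (phis A ph n d a).
  by move=> a /=; rewrite phisT.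
rewrite (@cobdry_morph (An n) (An (d+n)) _ _ _ (phis A ph n d) h1 h2 h3 h4).
by rewrite -(@cobdry_pull _ _ _ (opX (d+n)) (opX n) k (ps n d) (psis_op n d)).
Qed.

Lemma sigma_tau k n d f y : sig k (d+n) (tau k n d f) y = sig k n f y.
Proof.
rewrite /sigma_map /tau_iter iota_phis; congr iota; congr f.
by apply: functional_extensionality => j; rewrite pr_thread.
Qed.

Lemma tau_add k n d (f g : ('I_k -> X n) -> A n) x :
  tau k n d (fun y => f y + g y)%R x = (tau k n d f x + tau k n d g x)%R.
Proof. by rewrite /tau_iter phisD. Qed.

Lemma sigma_add k n (f g : ('I_k -> X n) -> A n) y :
  sig k n (fun z => f z + g z)%R y = dl_add A ph (sig k n f y) (sig k n g y).
Proof. by rewrite /sigma_map dl_addE. Qed.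

Lemma sigma_cochain k n f : is_cochain (An n) (X n) k f -> is_cochain D L k (sig k n f).
Proof.
move=> H y [i [j [e E]]]; rewrite /sigma_map H ?iota0 //=.
by exists i, j; split=> //; rewrite E.
Qed.

Lemma tau_cochain k n d f : is_cochain (An n) (X n) k f -> is_cochain (An (d+n)) (X (d+n)) k (tau k n d f).
Proof.
move=> H y [i [j [e E]]]; rewrite /tau_iter H ?phis0 //=.
by exists i, j; split=> //; rewrite E.
Qed.

Lemma sigma_cont k n f : is_cont Xt psi D k (sig k n f).
Proof.
move=> x; exists n => y H; rewrite /sigma_map; congr iota; congr f.
by apply: functional_extensionality => j; apply: H.
Qed.

Lemma tau_cocycle k n d f : is_cocycle (An n) (X n) (opX n) k.+1 f ->
  is_cocycle (An (d+n)) (X (d+n)) (opX (d+n)) k.+1 (tau k.+1 n d f).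
Proof.
move=> [H1 H2]; split; first exact: tau_cochain.
move=> x; rewrite -tau_cobdry /tau_iter H2 /=; exact: phis0.
Qed.

Lemma sigma_cocycle k n f : is_cocycle (An n) (X n) (opX n) k.+1 f ->
  is_cont Xt psi D k.+1 (sig k.+1 n f) /\ is_cocycle D L Lop k.+1 (sig k.+1 n f).
Proof.
move=> [H1 H2]; split; first exact: sigma_cont.
split; first exact: sigma_cochain.
by move=> y; rewrite -sigma_cobdry /sigma_map H2 /= iota0.
Qed.
Lemma pigeon (W : finType) (Q : nat -> W -> Prop) :
  (forall M M' w, M <= M' -> Q M' w -> Q M w) -> (forall M, exists w, Q M w) ->
  exists w, forall M, Q M w.
Proof.
move=> anti ex; apply: NNPP => H.
have H' : forall w, exists M, ~ Q M w.
  move=> w; apply: NNPP => H2; apply: H; exists w => M; apply: NNPP => H3.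
  by apply: H2; exists M.
pose Mf w := proj1_sig (constructive_indefinite_description _ (H' w)).
have HMf w : ~ Q (Mf w) w := proj2_sig (constructive_indefinite_description _ (H' w)).
have [w0 Hw0] := ex (\max_(w : W) Mf w).
by apply: (HMf w0); apply: anti Hw0; apply: leq_bigmax.
Qed.

Lemma Xinh n : exists x : X n, True.
Proof. by case/card_gt0P: (Xne n) => x _; exists x. Qed.

Lemma unif_cont k (g : ('I_k -> L) -> D) : is_cont Xt psi D k g ->
  exists N, forall y y', (forall j, pr N (y j) = pr N (y' j)) -> g y = g y'.
Proof.
move=> Hc; apply: NNPP => Hn.
have Hb : forall N, exists y y', (forall j, pr N (y j) = pr N (y' j)) /\ g y <> g y'.
  move=> N; apply: NNPP => H1; apply: Hn; exists N => y y' Hy; apply: NNPP => H2.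
  by apply: H1; exists y, y'.
pose Bad n (w : {ffun 'I_k -> X n}) := forall M, exists y y',
  [/\ forall j, pr n (y j) = w j, forall j, pr M (y j) = pr M (y' j) & g y <> g y'].
have anti : forall M M' (y y' : 'I_k -> L), M <= M' -> (forall j, pr M' (y j) = pr M' (y' j)) ->
   (forall j, pr M (y j) = pr M (y' j)).
  by move=> M M' y y' le H j; exact: (agree_down M' _ _ (H j) M le).
have [w0 Hw0] : exists w, Bad 0 w.
  have := @pigeon _ (fun M (w : {ffun 'I_k -> X 0}) => exists y y',
     [/\ forall j, pr 0 (y j) = w j, forall j, pr M (y j) = pr M (y' j) & g y <> g y']).
  case.
  - move=> M M' w le [y [y' [H1 H2 H3]]]; exists y, y'; split=> //; exact: anti H2.
  - move=> M; have [y [y' [H1 H2]]] := Hb M.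
    by exists [ffun j => pr 0 (y j)], y, y'; split=> // j; rewrite ffunE.
  by move=> w Hw; exists w.
have Hnext : forall n (w : {ffun 'I_k -> X n}), exists w' : {ffun 'I_k -> X n.+1},
    Bad n w -> (forall j, psi n (w' j) = w j) /\ Bad n.+1 w'.
  move=> n w; case: (classic (Bad n w)) => Hw; last first.
    by have [x0 _] := Xinh n.+1; exists [ffun => x0].
  have := @pigeon _ (fun M (w' : {ffun 'I_k -> X n.+1}) => (forall j, psi n (w' j) = w j) /\ exists y y',
     [/\ forall j, pr n.+1 (y j) = w' j, forall j, pr M (y j) = pr M (y' j) & g y <> g y']).
  case.
  - move=> M M' w' le [Hp [y [y' [H1 H2 H3]]]]; split=> //; exists y, y'; split=> //; exact: anti H2.
  - move=> M; have [y [y' [H1 H2 H3]]] := Hw M.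
    exists [ffun j => pr n.+1 (y j)]; split.
      by move=> j; rewrite ffunE -H1 /proj_n (proj2_sig (y j)).
    by exists y, y'; split=> // j; rewrite ffunE.
  move=> w' Hw'; exists w' => _; split; first by have [] := Hw' 0.
  by move=> M; have [_ H] := Hw' M.
pose next n w := proj1_sig (constructive_indefinite_description _ (Hnext n w)).
have Hnx n w : Bad n w -> (forall j, psi n (next n w j) = w j) /\ Bad n.+1 (next n w).
  exact: (proj2_sig (constructive_indefinite_description _ (Hnext n w))).
pose t := nat_rect (fun n => {ffun 'I_k -> X n}) w0 next.
have Ht : forall n, Bad n (t n) by elim=> [|n IH] //=; have [] := Hnx n _ IH.
have Hcomp : forall n j, psi n (t n.+1 j) = t n j by move=> n j; have [] := Hnx n _ (Ht n).
pose x : 'I_k -> L := fun j => exist (fun s : forall n, X n => forall n, psi n (s n.+1) = s n) (fun n => t n j) (fun n => Hcomp n j).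
have [N HN] := Hc x.
have [y [y' [H1 H2 H3]]] := Ht N N.
apply: H3; rewrite (HN y) ?(HN y') //.
- move=> j n le; apply: (agree_down N) => //; by rewrite -H2 H1.
- move=> j n le; apply: (agree_down N) => //; by rewrite H1.
Qed.

Lemma unif_cont' k (g : ('I_k -> L) -> D) : is_cont Xt psi D k g ->
  exists N, forall M, N <= M -> forall y y', (forall j, pr M (y j) = pr M (y' j)) -> g y = g y'.
Proof.
move=> /unif_cont [N HN]; exists N => M le y y' H; apply: HN => j.
exact: (agree_down M _ _ (H j) N le).
Qed.
Definition castX p q (e : p = q) (x : X p) : X q := eq_rect p (fun r => (X r : Type)) x q e.
Arguments castX {p q} e x.

Lemma castX_irr {p q} (e e' : p = q) x : castX e x = castX e' x.
Proof. by rewrite (eq_irrelevance e e'). Qed.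
Lemma castX_id {p} (e : p = p) x : castX e x = x.
Proof. by rewrite (eq_irrelevance e erefl). Qed.
Lemma castX_comp {p q r} (e1 : p = q) (e2 : q = r) x : castX e2 (castX e1 x) = castX (etrans e1 e2) x.
Proof. by subst. Qed.
Lemma castX_psi {a b} (e : a.+1 = b.+1) (e' : a = b) x : psi b (castX e x) = castX e' (psi a x).
Proof. by subst; rewrite !castX_id. Qed.

Lemma CL d n (v : X (d.+1 + n)) (e : d.+1 + n = d + n.+1) :
  psi n (ps n.+1 d (castX e v)) = ps n d.+1 v.
Proof.
elim: d v e => [|d IH] v e; first by rewrite castX_id.
have e' : d.+1 + n = d + n.+1 by rewrite addSnnS.
rewrite /= (castX_psi (a := d.+1 + n) (b := d + n.+1) e e').
exact: (IH (psi (d.+1 + n) v) e').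
Qed.

Definition Pre n d (z : X n) := exists v : X (d + n), ps n d v = z.
Definition Sset n (z : X n) := forall d, Pre n d z.

Lemma Pre_down n d z : Pre n d.+1 z -> Pre n d z.
Proof. by case=> v <-; exists (psi (d + n) v). Qed.
Lemma Pre_mono n d d' z : d <= d' -> Pre n d' z -> Pre n d z.
Proof.
move=> le; rewrite -(subnK le); elim: (d' - d) => //= c IH H.
by apply: IH; apply: Pre_down.
Qed.

Lemma stab n : exists d0, forall x : X (d0 + n), Sset n (ps n d0 x).
Proof.
have H : forall z : X n, exists Dz, ~ Sset n z -> ~ Pre n Dz z.
  move=> z; case: (classic (Sset n z)) => Hz; first by exists 0.
  have [Dz HD] : exists Dz, ~ Pre n Dz z.
    by apply: NNPP => H1; apply: Hz => d; apply: NNPP => H2; apply: H1; exists d.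
  by exists Dz.
pose Df z := proj1_sig (constructive_indefinite_description _ (H z)).
have HDf z : ~ Sset n z -> ~ Pre n (Df z) z := proj2_sig (constructive_indefinite_description _ (H z)).
exists (\max_(z : X n) Df z) => x; apply: NNPP => Hs.
apply: (HDf _ Hs); apply: (@Pre_mono n _ (\max_(z : X n) Df z)); first exact: leq_bigmax.
by exists x.
Qed.

Lemma up n z : Sset n z -> exists z' : X n.+1, psi n z' = z /\ Sset n.+1 z'.
Proof.
move=> Hz; apply: NNPP => Hn.
have H : forall z' : X n.+1, exists Dz, psi n z' = z -> ~ Pre n.+1 Dz z'.
  move=> z'; case: (classic (psi n z' = z)) => E; last by exists 0.
  have [Dz HD] : exists Dz, ~ Pre n.+1 Dz z'.
    apply: NNPP => H1; apply: Hn; exists z'; split=> // d; apply: NNPP => H2; apply: H1.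
    by exists d.
  by exists Dz.
pose Df z' := proj1_sig (constructive_indefinite_description _ (H z')).
have HDf z' : psi n z' = z -> ~ Pre n.+1 (Df z') z' :=
  proj2_sig (constructive_indefinite_description _ (H z')).
pose Dm := \max_(z' : X n.+1) Df z'.
have [v Hv] := Hz Dm.+1.
have e : Dm.+1 + n = Dm + n.+1 by rewrite addSnnS.
pose z' := ps n.+1 Dm (castX e v).
have E : psi n z' = z by rewrite /z' CL.
apply: (HDf z' E); apply: (@Pre_mono n.+1 _ Dm); first exact: leq_bigmax.
by exists (castX e v).
Qed.

Lemma thread N z : Sset N z -> exists l : L, pr N l = z.
Proof.
move=> Hz.
have Hnext : forall n (w : X (n + N)), exists w' : X (n.+1 + N),
    Sset (n + N) w -> psi (n + N) w' = w /\ Sset (n.+1 + N) w'.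
  move=> n w; case: (classic (Sset (n + N) w)) => Hw; last first.
    by have [x0 _] := Xinh (n.+1 + N); exists x0.
  by have [w' Hw'] := up _ _ Hw; exists w'.
pose next n w := proj1_sig (constructive_indefinite_description _ (Hnext n w)).
have Hnx n w : Sset (n + N) w -> psi (n + N) (next n w) = w /\ Sset (n.+1 + N) (next n w).
  exact: (proj2_sig (constructive_indefinite_description _ (Hnext n w))).
pose v := nat_rect (fun n => X (n + N)) z next.
have Hv : forall n, Sset (n + N) (v n) by elim=> [|n IH] //=; have [] := Hnx n _ IH.
have Hc : forall n, psi (n + N) (v n.+1) = v n by move=> n; have [] := Hnx n _ (Hv n).
pose l n := ps n N (castX (addnC n N) (v n)).
have Hl : forall n, psi n (l n.+1) = l n.
  move=> n; rewrite /l.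
  have ea : n.+1 + N = N.+1 + n by rewrite addSn addnC.
  have eb : N.+1 + n = N + n.+1 by rewrite addSnnS.
  rewrite (castX_irr (addnC n.+1 N) (etrans ea eb)) -castX_comp CL /=.
  have ec : n + N = N + n by rewrite addnC.
  rewrite (castX_psi (a := n + N) (b := N + n) ea ec) Hc.
  by rewrite (castX_irr ec (addnC n N)).
exists (exist (fun s : forall n, X n => forall n, psi n (s n.+1) = s n) l Hl).
rewrite /proj_n /= /l castX_id.
have : forall n, ps N n (v n) = z by elim=> [|n IH] //=; rewrite Hc.
by [].
Qed.

Lemma lift_stab N : exists d, forall x : X (d + N), exists l : L, pr N l = ps N d x.
Proof.
have [d Hd] := stab N; exists d => x.
exact: (thread _ _ (Hd x)).
Qed.
Notation castco := (castco Xt A).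

Lemma castco_id k p (e : p = p) (f : ('I_k -> X p) -> A p) x : castco k p p e f x = f x.
Proof. by rewrite (eq_irrelevance e erefl). Qed.

Lemma tau_ext k n d (f g : ('I_k -> X n) -> A n) x :
  (forall y, f y = g y) -> tau k n d f x = tau k n d g x.
Proof. by move=> H; rewrite /tau_iter H. Qed.

Lemma castco_tau k a b d (e' : a = b) (e : d + a = d + b) (G : ('I_k -> X a) -> A a) x :
  castco k _ _ e (tau k a d G) x = tau k b d (castco k _ _ e' G) x.
Proof. by subst; rewrite castco_id. Qed.

Lemma TC k n d c (e : c + d + n = c + (d + n)) (f : ('I_k -> X n) -> A n) x :
  castco k _ _ e (tau k n (c + d) f) x = tau k (d + n) c (tau k n d f) x.
Proof.
elim: c e x => [|c IH] e x; first by rewrite castco_id.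
have e' : c + d + n = c + (d + n) by rewrite addnA.
have -> : tau k (d + n) c.+1 (tau k n d f) x =
  tau k (c + (d + n)) 1 (tau k (d + n) c (tau k n d f)) x by [].
rewrite (tau_ext _ _ 1 _ _ x (fun y => esym (IH e' y))).
rewrite -(castco_tau k _ _ 1 e' e).
by [].
Qed.

Definition Reach k q (G : ('I_k -> X q) -> A q) p (H : ('I_k -> X p) -> A p) :=
  exists d (e : d + q = p), forall x, H x = castco k _ _ e (tau k q d G) x.

Lemma Reach_tau k q G d : Reach k q G (d + q) (tau k q d G).
Proof. by exists d, erefl. Qed.

Lemma Reach_trans k q G p H r K : Reach k q G p H -> Reach k p H r K -> Reach k q G r K.
Proof.
move=> [d1 [e1 E1]] [d2 [e2 E2]]; subst p r.
have e : d2 + d1 + q = d2 + (d1 + q) by rewrite addnA.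
exists (d2 + d1), (etrans e erefl) => x.
rewrite E2 /= TC; apply: tau_ext => y; exact: E1.
Qed.

Lemma Reach_sigma k q G p H : Reach k q G p H -> forall y, sig k p H y = sig k q G y.
Proof.
move=> [d [e E]] y; subst p; rewrite -(sigma_tau k q d G y) /sigma_map E.
by [].
Qed.

Lemma Reach_cocycle k q G p H : Reach k.+1 q G p H ->
  is_cocycle (An q) (X q) (opX q) k.+1 G -> is_cocycle (An p) (X p) (opX p) k.+1 H.
Proof.
move=> [d [e E]] Hc; subst p; have [H1 H2] := tau_cocycle k q d G Hc.
split.
  move=> x Hx; rewrite E; exact: H1.
move=> x; rewrite -(H2 x); congr foldr; apply: eq_map => i.
by rewrite !E.
Qed.

Lemma coheq_ext (R : AlexQ) (Y : Type) (op : Y -> Y -> Y) m Pr (f f' g g' : ('I_m.+1 -> Y) -> R) :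
  (forall x, f x = f' x) -> (forall x, g x = g' x) ->
  cohom_eq R Y op m Pr f g -> cohom_eq R Y op m Pr f' g'.
Proof.
move=> Ef Eg [H|[Hm [h [H1 H2 H3]]]]; [left|right] => //.
  by move=> x; rewrite -Ef -Eg.
by split=> //; exists h; split=> // x; rewrite -Ef -Eg.
Qed.

Lemma iota_tau k n d F x : iota (d + n) (tau k n d F x) = iota n (F (fun j => ps n d (x j))).
Proof. by rewrite /tau_iter iota_phis. Qed.

Lemma evZ k P (F G : ('I_k -> X P) -> A P) : (forall x, iota P (F x) = iota P (G x)) ->
  exists c, forall x : 'I_k -> X (c + P), tau k P c F x = tau k P c G x.
Proof.
move=> H.
have H' : forall w : {ffun 'I_k -> X P}, exists c, phis A ph P c (F w) = phis A ph P c (G w).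
  by move=> w; apply/iota_same.
pose cf w := proj1_sig (constructive_indefinite_description _ (H' w)).
have Hcf w : phis A ph P (cf w) (F w) = phis A ph P (cf w) (G w) :=
  proj2_sig (constructive_indefinite_description _ (H' w)).
exists (\max_w cf w) => x; rewrite /tau_iter.
pose w := [ffun j => ps P (\max_w cf w) (x j)].
have -> : (fun j => ps P (\max_w cf w) (x j)) = w.
  by apply: functional_extensionality => j; rewrite ffunE.
apply: (@phis_mono A phi P (cf w) _ _ _); first exact: leq_bigmax.
exact: Hcf.
Qed.

Lemma lift_cobdry k (H : ('I_k -> L) -> D) Q P (w : X P -> X Q) (lf : X Q -> L)
  (hw : forall a b, w (opX P a b) = opX Q (w a) (w b))
  (hl : forall a, pr Q (lf (w a)) = w a)
  (HK : forall y y', (forall j, pr Q (y j) = pr Q (y' j)) -> H y = H y') x :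
  cobdry D (X P) (opX P) k (fun x' => H (fun j => lf (w (x' j)))) x
  = cobdry D L Lop k H (fun j => lf (w (x j))).
Proof.
apply: cobdry_congr => i; split=> //; apply: HK => j.
case: ifP => _ //=; move: (hl (opX P (x (lift i j)) (x i))) (hl (x (lift i j))) (hl (x i)).
by rewrite /proj_n => -> -> ->; exact: hw.
Qed.

Lemma reps (W : finType) (u : W -> D) : exists R, forall q, R <= q ->
  exists r : W -> A q, forall w, u w = iota q (r w) /\ (u w = dl_zero A ph -> r w = 0%R).
Proof.
have H : forall w, exists n, exists a, u w = iota n a by move=> w; exact: dl_surj.
pose nf w := proj1_sig (constructive_indefinite_description _ (H w)).
have H2 w : exists a, u w = iota (nf w) a := proj2_sig (constructive_indefinite_description _ (H w)).
pose af w := proj1_sig (constructive_indefinite_description _ (H2 w)).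
have Haf w : u w = iota (nf w) (af w) := proj2_sig (constructive_indefinite_description _ (H2 w)).
exists (\max_w nf w) => q le.
have H3 : forall w, exists b : A q, u w = iota q b /\ (u w = dl_zero A ph -> b = 0%R).
  move=> w; case: (classic (u w = dl_zero A ph)) => Hz.
    by exists 0%R; rewrite iota0.
  have [b Hb] := iota_raise phi (af w) (leq_trans (leq_bigmax (F := nf) w) le).
  by exists b; split=> //; rewrite Haf.
exists (fun w => proj1_sig (constructive_indefinite_description _ (H3 w))) => w.
exact: (proj2_sig (constructive_indefinite_description _ (H3 w))).
Qed.

Lemma surj K (g : ('I_K -> L) -> D) : is_cont Xt psi D K g -> is_cocycle D L Lop K g ->
  exists n f, is_cocycle (An n) (X n) (opX n) K f /\ forall y, sig K n f y = g y.
Proof.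
move=> Hc [Hcc Hcy].
have [Q HN0] := unif_cont' K g Hc.
have HK : forall y y', (forall j, pr Q (y j) = pr Q (y' j)) -> g y = g y' := HN0 Q (leqnn _).
have [d Hd] := lift_stab Q.
have [x0 _] := Xinh (d + Q).
have [l0 _] := Hd x0.
pose lf (z : X Q) := epsilon (inhabits l0) (fun l => pr Q l = z).
have Hlf : forall a : X (d + Q), pr Q (lf (ps Q d a)) = ps Q d a.
  by move=> a; exact: (epsilon_spec (inhabits l0) (fun l => pr Q l = ps Q d a) (Hd a)).
have [R HR] := reps _ (fun z : {ffun 'I_K -> X Q} => g (fun j => lf (z j))).
have [r Hr] := HR (R + (d + Q)) (leq_addr _ _).
pose w (a : X (R + (d + Q))) := ps Q d (ps (d + Q) R a).
have hw : forall a b, w (opX (R + (d + Q)) a b) = opX Q (w a) (w b).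
  by move=> a b; rewrite /w !psis_op.
have hl : forall a, pr Q (lf (w a)) = w a by move=> a; exact: Hlf.
pose f (x : 'I_K -> X (R + (d + Q))) := r [ffun j => w (x j)].
have Hf : forall x, iota (R + (d + Q)) (f x) = g (fun j => lf (w (x j))).
  move=> x; rewrite /f -(proj1 (Hr _)); congr g; apply: functional_extensionality => j.
  by rewrite ffunE.
have Ha : forall y, sig K (R + (d + Q)) f y = g y.
  move=> y; rewrite /sigma_map Hf; apply: HK => j; rewrite hl /w !pr_thread.
  by [].
have Hb : is_cochain (An (R + (d + Q))) (X (R + (d + Q))) K f.
  move=> x [i [j [e E]]]; rewrite /f; apply: (proj2 (Hr _)); apply: Hcc.
  by exists i, j; split=> //; rewrite !ffunE E.
have Hcl : forall x, iota (R + (d + Q)) (cobdry (An (R + (d + Q))) (X (R + (d + Q))) (opX (R + (d + Q))) K f x)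
   = iota (R + (d + Q)) ((fun _ => 0%R) x).
  move=> x; rewrite iota0; have [h1 h2 h3 h4] := iota_morph (R + (d + Q)).
  rewrite (@cobdry_morph (An (R + (d + Q))) D _ _ _ (iota (R + (d + Q))) h1 h2 h3 h4).
  have -> : (fun y => iota (R + (d + Q)) (f y)) = (fun x' => g (fun j => lf (w (x' j)))).
    by apply: functional_extensionality => y; exact: Hf.
  by rewrite (lift_cobdry K g Q (R + (d + Q)) w lf hw hl HK x) Hcy.
have [c Hc'] := evZ _ _ _ _ Hcl.
exists (c + (R + (d + Q))), (tau K (R + (d + Q)) c f); split.
  split; first exact: tau_cochain.
  by move=> x; rewrite -tau_cobdry Hc' /tau_iter phis0.
by move=> y; rewrite sigma_tau.
Qed.

Lemma inj_common m q (G1 G2 : ('I_m.+1 -> X q) -> A q) :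
  cohom_eq D L Lop m (is_cont Xt psi D m) (sig m.+1 q G1) (sig m.+1 q G2) ->
  exists p H1 H2, [/\ Reach m.+1 q G1 p H1, Reach m.+1 q G2 p H2 &
     cohom_eq (An p) (X p) (opX p) m (fun _ => True) H1 H2].
Proof.
case=> [H|[Hm [h [Hhc Hhco Hh]]]].
  have [d Hd] := lift_stab q.
  have Hev : forall x : 'I_m.+1 -> X (d + q),
      iota (d + q) (tau m.+1 q d G1 x) = iota (d + q) (tau m.+1 q d G2 x).
    move=> x; rewrite !iota_tau.
    have Hy : forall j, exists l : L, pr q l = ps q d (x j) by move=> j; exact: Hd.
    pose y j := proj1_sig (constructive_indefinite_description _ (Hy j)).
    have -> : (fun j => ps q d (x j)) = (fun j => pr q (y j)).
      apply: functional_extensionality => j.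
      by rewrite (proj2_sig (constructive_indefinite_description _ (Hy j))).
    exact: H y.
  have [c Hc] := evZ _ _ _ _ Hev.
  exists (c + (d + q)), (tau m.+1 (d + q) c (tau m.+1 q d G1)),
    (tau m.+1 (d + q) c (tau m.+1 q d G2)); split.
  - exact: Reach_trans (Reach_tau _ _ _ _) (Reach_tau _ _ _ _).
  - exact: Reach_trans (Reach_tau _ _ _ _) (Reach_tau _ _ _ _).
  - by left.
have [Nh HNh] := unif_cont' m h Hhc.
have HK : forall y y', (forall j, pr (Nh + q) (y j) = pr (Nh + q) (y' j)) -> h y = h y'.
  exact: (HNh (Nh + q) (leq_addr _ _)).
have [d Hd] := lift_stab (Nh + q).
have [x0 _] := Xinh (d + (Nh + q)).
have [l0 _] := Hd x0.
pose lf (z : X (Nh + q)) := epsilon (inhabits l0) (fun l => pr (Nh + q) l = z).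
have Hlf : forall a : X (d + (Nh + q)), pr (Nh + q) (lf (ps (Nh + q) d a)) = ps (Nh + q) d a.
  by move=> a; exact: (epsilon_spec (inhabits l0) (fun l => pr (Nh + q) l = ps (Nh + q) d a) (Hd a)).
have [R HR] := reps _ (fun z : {ffun 'I_m -> X (Nh + q)} => h (fun j => lf (z j))).
have [r Hr] := HR (R + (d + (Nh + q))) (leq_addr _ _).
pose w (a : X (R + (d + (Nh + q)))) := ps (Nh + q) d (ps (d + (Nh + q)) R a).
have hw : forall a b, w (opX (R + (d + (Nh + q))) a b) = opX (Nh + q) (w a) (w b).
  by move=> a b; rewrite /w !psis_op.
have hl : forall a, pr (Nh + q) (lf (w a)) = w a by move=> a; exact: Hlf.
pose h' (x : 'I_m -> X (R + (d + (Nh + q)))) := r [ffun j => w (x j)].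
have Hh' : forall x, iota (R + (d + (Nh + q))) (h' x) = h (fun j => lf (w (x j))).
  move=> x; rewrite /h' -(proj1 (Hr _)); congr h; apply: functional_extensionality => j.
  by rewrite ffunE.
have Hb : is_cochain (An (R + (d + (Nh + q)))) (X (R + (d + (Nh + q)))) m h'.
  move=> x [i [j [e E]]]; rewrite /h'; apply: (proj2 (Hr _)); apply: Hhco.
  by exists i, j; split=> //; rewrite !ffunE E.
pose T1 := tau m.+1 (d + (Nh + q)) R (tau m.+1 (Nh + q) d (tau m.+1 q Nh G1)).
pose T2 := tau m.+1 (d + (Nh + q)) R (tau m.+1 (Nh + q) d (tau m.+1 q Nh G2)).
have Hev : forall x, iota (R + (d + (Nh + q))) (T1 x) =
   iota (R + (d + (Nh + q))) ((fun x => T2 x + cobdry (An (R + (d + (Nh + q)))) (X (R + (d + (Nh + q))))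
        (opX (R + (d + (Nh + q)))) m h' x) x)%R.
  move=> x /=; rewrite -dl_addE /T1 /T2 !iota_tau.
  pose y j := lf (w (x j)).
  have Ey : (fun j => ps q Nh (ps (Nh + q) d (ps (d + (Nh + q)) R (x j)))) = (fun j => pr q (y j)).
    apply: functional_extensionality => j; rewrite /y -(pr_thread _ q Nh) hl.
    by [].
  rewrite Ey.
  have -> : iota q (G1 (fun j => pr q (y j))) = sig m.+1 q G1 y by [].
  have -> : iota q (G2 (fun j => pr q (y j))) = sig m.+1 q G2 y by [].
  rewrite Hh; congr dl_add.
  have [h1 h2 h3 h4] := iota_morph (R + (d + (Nh + q))).
  rewrite (@cobdry_morph (An (R + (d + (Nh + q)))) D _ _ _ (iota (R + (d + (Nh + q)))) h1 h2 h3 h4).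
  have -> : (fun y => iota (R + (d + (Nh + q))) (h' y)) = (fun x' => h (fun j => lf (w (x' j)))).
    by apply: functional_extensionality => y'; exact: Hh'.
  by rewrite (lift_cobdry m h (Nh + q) (R + (d + (Nh + q))) w lf hw hl HK x).
have [c Hc] := evZ _ _ _ _ Hev.
exists (c + (R + (d + (Nh + q)))), (tau m.+1 (R + (d + (Nh + q))) c T1),
  (tau m.+1 (R + (d + (Nh + q))) c T2); split.
- apply: Reach_trans (Reach_tau _ _ _ _); apply: Reach_trans (Reach_tau _ _ _ _).
  by apply: Reach_trans (Reach_tau _ _ _ _) (Reach_tau _ _ _ _).
- apply: Reach_trans (Reach_tau _ _ _ _); apply: Reach_trans (Reach_tau _ _ _ _).
  by apply: Reach_trans (Reach_tau _ _ _ _) (Reach_tau _ _ _ _).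
right; split=> //; exists (tau m (R + (d + (Nh + q))) c h'); split=> //.
  exact: tau_cochain.
by move=> x; rewrite Hc tau_add tau_cobdry.
Qed.
End Main.

Theorem mainTheorem10
  (X : nat -> finType) (opX : forall n, X n -> X n -> X n)
  (Xq : forall n, is_quandle (X n) (opX n))
  (Xne : forall n, (0 < #|X n|)%N)
  (psi : forall n, X n.+1 -> X n)
  (hpsi : forall n a b, psi n (opX n.+1 a b) = opX n (psi n a) (psi n b))
  (A : nat -> zmodType) (T : forall n, {additive A n -> A n})
  (Tbij : forall n, bijective (T n))
  (phi : forall n, {additive A n -> A n.+1})
  (phiT : forall n a, phi n (T n a) = T n.+1 (phi n a))
  (m : nat) :
  let Xt := fun n => (X n : Type) in
  let ph := fun n => (phi n : A n -> A n.+1) in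
  let Tf := fun n => (T n : A n -> A n) in
  let L := invlim Xt psi in
  let Lop := invlim_op Xt psi opX hpsi in
  let D := dl_alex A ph Tf in
  let An := fun n => zmodAlex (A n) (Tf n) in
  let cocyc n (f : ('I_m.+1 -> X n) -> A n) :=
    is_cocycle (An n) (X n) (opX n) m.+1 f in
  let coheq n (f g : ('I_m.+1 -> X n) -> A n) :=
    cohom_eq (An n) (X n) (opX n) m (fun _ => True) f g in
  let ccocyc (g : ('I_m.+1 -> L) -> D) :=
    is_cont Xt psi D m.+1 g /\ is_cocycle D L Lop m.+1 g in
  let ccoheq (g g' : ('I_m.+1 -> L) -> D) :=
    cohom_eq D L Lop m (is_cont Xt psi D m) g g' in
  let sigma n f := sigma_map Xt psi A ph m.+1 n f in
  let tau n d f := tau_iter Xt psi A ph m.+1 n d f in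
  [/\ (* sigma_n is well defined on cohomology classes *)
      (forall n f, cocyc n f -> ccocyc (sigma n f)),
      (forall n f g, cocyc n f -> cocyc n g -> coheq n f g ->
                     ccoheq (sigma n f) (sigma n g)),
      (* compatibility sigma_{n+1} o tau_n = sigma_n *)
      (forall n f, cocyc n f -> ccoheq (sigma n.+1 (tau n 1 f)) (sigma n f)),
      (* additivity *)
      (forall n f g x, sigma n (fun y => f y + g y)%R x
                       = dl_add A ph (sigma n f x) (sigma n g x)) &
      (* Psi is bijective: surjective ... *)
      (forall g, ccocyc g -> exists n f, cocyc n f /\ ccoheq (sigma n f) g) /\
      (* ... and injective *)
      (forall n1 n2 f1 f2, cocyc n1 f1 -> cocyc n2 f2 ->
         ccoheq (sigma n1 f1) (sigma n2 f2) ->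
         exists p d1 d2 (e1 : (d1 + n1)%N = p) (e2 : (d2 + n2)%N = p),
           coheq p (castco Xt A m.+1 _ _ e1 (tau n1 d1 f1))
                   (castco Xt A m.+1 _ _ e2 (tau n2 d2 f2)))].
Proof.
Proof.
move=> Xt ph Tf L Lop D An cocyc coheq ccocyc ccoheq sigma tau.
subst Xt ph Tf L Lop D An cocyc coheq ccocyc ccoheq sigma tau.
split.
- move=> n f Hf; exact: (sigma_cocycle X opX psi hpsi A T phi phiT m n f Hf).
- move=> n f g Hf Hg [E|[Hm [h [_ Hh E]]]].
    by left => y; rewrite /sigma_map E.
  right; split=> //; exists (sigma_map (fun n => X n : Type) psi A (fun n => phi n : A n -> A n.+1) m n h).
  split.
  + exact: (sigma_cont X psi A T phi m n h).
  + exact: (sigma_cochain X psi A T phi m n h Hh).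
  + move=> y; rewrite -(sigma_cobdry X opX psi hpsi A T phi phiT m n h y) /sigma_map E.
    by rewrite /= dl_addE.
- move=> n f Hf; left => y; exact: (sigma_tau X psi A phi m.+1 n 1 f y).
- move=> n f g x; exact: (sigma_add X psi A phi m.+1 n f g x).
split.
  move=> g [Hc Hcy].
  have [n [f [Hf E]]] := surj X opX Xne psi hpsi A T phi phiT m.+1 g Hc Hcy.
  by exists n, f; split=> //; left.
move=> n1 n2 f1 f2 H1 H2 Hco.
have R1 := Reach_tau X psi A phi m.+1 n1 f1 n2.
pose G2 := castco (fun n => X n : Type) A m.+1 _ _ (addnC n1 n2)
   (tau_iter (fun n => X n : Type) psi A (fun n => phi n : A n -> A n.+1) m.+1 n2 n1 f2).
have R2 : Reach X psi A phi m.+1 n2 f2 (n2 + n1) G2 by exists n1, (addnC n1 n2).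
have Hco' : cohom_eq (dl_alex A (fun n => phi n : A n -> A n.+1) (fun n => T n : A n -> A n))
    (invlim (fun n => X n : Type) psi) (invlim_op (fun n => X n : Type) psi opX hpsi) m
    (is_cont (fun n => X n : Type) psi (dl_alex A (fun n => phi n : A n -> A n.+1) (fun n => T n : A n -> A n)) m)
    (sigma_map (fun n => X n : Type) psi A (fun n => phi n : A n -> A n.+1) m.+1 (n2 + n1)
        (tau_iter (fun n => X n : Type) psi A (fun n => phi n : A n -> A n.+1) m.+1 n1 n2 f1))
    (sigma_map (fun n => X n : Type) psi A (fun n => phi n : A n -> A n.+1) m.+1 (n2 + n1) G2).
  apply: (coheq_ext _ _ _ _ _ _ _ _ _ _ _ Hco) => y.
    by rewrite (Reach_sigma X psi A phi _ _ _ _ _ R1 y).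
  by rewrite (Reach_sigma X psi A phi _ _ _ _ _ R2 y).
have [p [H1' [H2' [Ra Rb Hc]]]] := inj_common X opX Xne psi hpsi A T phi phiT m (n2 + n1) _ G2 Hco'.
have [d1 [e1 E1]] := Reach_trans X psi A phi _ _ _ _ _ _ _ R1 Ra.
have [d2 [e2 E2]] := Reach_trans X psi A phi _ _ _ _ _ _ _ R2 Rb.
exists p, d1, d2, e1, e2.
apply: (coheq_ext _ _ _ _ _ _ _ _ _ _ _ Hc) => x.
  exact: E1.
exact: E2.
Qed.
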